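(* Let $\mathcal{N}=(D,P)$ be a broadcast network with client $P=(Q,I,\delta)$, let $F\subseteq Q$, and let $\mathcal{N}_F$ be the instrumented network. For configurations $c_0,c\in Q^k$: there is a computation $c_0\to^* c\Rightarrow_F c$ in $\mathcal{N}$ if and only if there is a computation $\tilde c_0\to^* c\to^+ c$ in $\mathcal{N}_F$, where $\tilde c_0\in\tilde Q^k$ is defined by $\tilde c_0[i]=\widetilde{c_0[i]}$.
   Context: A broadcast network is a pair $\mathcal{N}=(D,P)$ where $D$ is a finite set of messages and $P=(Q,I,\delta)$ is a finite automaton with $\delta\subseteq Q\times\mathrm{Ops}(D)\times Q$, $\mathrm{Ops}(D)=\{!a,\ ?a: a\in D\}$. A configuration is $c\in Q^k$ for some $k$, with entries $c[i]$. For $c,c'\in Q^k$ and $a\in D$, $c\xrightarrow{a}c'$ holds if there is $i$ with $(c[i],!a,c'[i])\in\delta$, a set $R\subseteq[1..k]\setminus\{i\}$ with $(c[j],?a,c'[j])\in\delta$ for $j\in R$, and $c[j]=c'[j]$ for $j\notin R\cup\{i\}$; then $\mathrm{type}(c\xrightarrow{a}c')=R\cup\{i\}$. $\to^*$ (resp. $\to^+$) means zero or more (resp. at least one) transitions. A finite computation $c_1\to\cdots\to c_n$ with $n\ge2$ is good for $F$, written $c_1\Rightarrow_F c_n$, if every client $i$ with $i\in\mathrm{type}(c_j\to c_{j+1})$ for some $j$ satisfies $c_k[i]\in F$ for some $k\in[1..n]$. The instrumented network is $\mathcal{N}_F=(D\cup\{n\},P_F)$ with a fresh message $n\notin D$ and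 client $P_F=(\bar Q,\tilde I,\bar\delta)$, where $\bar Q=Q\cup\hat Q\cup\tilde Q$ with $\hat Q=\{\hat q: q\in Q\}$ and $\tilde Q=\{\tilde q: q\in Q\}$ two disjoint copies of $Q$, $\tilde I=\{\tilde q: q\in I\}$, and $\bar\delta$ contains exactly: for every $(q,o,q')\in\delta$ the transitions $(q,o,\hat q')$, $(\hat q,o,\hat q')$, $(\tilde q,o,\tilde q')$; for every $q\in F$ the transition $(\hat q,!n,\tilde q)$; for every $q\in Q$ the transition $(\tilde q,!n,q)$. *)

(* Defs.v *)
From Stdlib Require List.
From mathcomp Require Import all_boot.
Set Implicit Arguments. Unset Strict Implicit. Unset Printing Implicit Defensive.

Inductive Op (M : Type) := Send of M | Recv of M.
Arguments Send {M}. Arguments Recv {M}.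

Section Network.
Variables (S M : Type) (delta : S -> Op M -> S -> Prop) (k : nat).

Definition config := {ffun 'I_k -> S}.

(* c --a--> c' with type(c -> c') = T  (T = R ∪ {i}) *)
Definition step (c : config) (a : M) (T : {set 'I_k}) (c' : config) : Prop :=
  exists i, [/\ i \in T, delta (c i) (Send a) (c' i) &
    forall j, j != i ->
      (j \in T -> delta (c j) (Recv a) (c' j)) /\ (j \notin T -> c' j = c j)].

Fixpoint run (c0 : config) (s : seq (M * {set 'I_k} * config)) : Prop :=
  match s with
  | [::] => True
  | (a, T, c1) :: s' => step c0 a T c1 /\ run c1 s'
  end.

Definition endcfg (c0 : config) (s : seq (M * {set 'I_k} * config)) : config :=
  last c0 [seq x.2 | x <- s].

Definition reach (c0 c : config) : Prop :=
  exists s, run c0 s /\ endcfg c0 s = c.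

Definition reach_plus (c0 c : config) : Prop :=
  exists s, s <> [::] /\ run c0 s /\ endcfg c0 s = c.

Definition good_reach (F : S -> Prop) (c0 c : config) : Prop :=
  exists s, [/\ s <> [::], run c0 s, endcfg c0 s = c &
    forall x, List.In x s -> forall i, i \in x.1.2 ->
      F (c0 i) \/ exists y, List.In y s /\ F (y.2 i)].

End Network.

Inductive QF (Q : Type) := Plain of Q | Hat of Q | Tilde of Q.
Arguments Plain {Q}. Arguments Hat {Q}. Arguments Tilde {Q}.

(* messages D ∪ {n}, with n encoded as None *)
Definition liftop (D : Type) (o : Op D) : Op (option D) :=
  match o with Send a => Send (Some a) | Recv a => Recv (Some a) end.

Inductive deltaF (Q D : Type) (delta : Q -> Op D -> Q -> Prop) (F : {pred Q})
  : QF Q -> Op (option D) -> QF Q -> Prop :=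
| dF_plain q o q' : delta q o q' -> deltaF delta F (Plain q) (liftop o) (Hat q')
| dF_hat q o q' : delta q o q' -> deltaF delta F (Hat q) (liftop o) (Hat q')
| dF_tilde q o q' : delta q o q' -> deltaF delta F (Tilde q) (liftop o) (Tilde q')
| dF_hat_n q : q \in F -> deltaF delta F (Hat q) (Send None) (Tilde q)
| dF_tilde_n q : deltaF delta F (Tilde q) (Send None) (Plain q).

Definition cfg_plain (Q : Type) k (c : {ffun 'I_k -> Q}) : {ffun 'I_k -> QF Q} :=
  [ffun i => Plain (c i)].
Definition cfg_tilde (Q : Type) k (c : {ffun 'I_k -> Q}) : {ffun 'I_k -> QF Q} :=
  [ffun i => Tilde (c i)].

(* Main.v *)
Require Import Defs.
From mathcomp Require Import all_boot.
Set Implicit Arguments. Unset Strict Implicit. Unset Printing Implicit Defensive.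

Section Gen.
Variables (S M : Type) (d : S -> Op M -> S -> Prop) (k : nat).
Implicit Types (x c : config S k) (s : seq (M * {set 'I_k} * config S k)).

Lemma endcfg_cons x a T c1 s : endcfg x ((a, T, c1) :: s) = endcfg c1 s.
Proof. by []. Qed.

Lemma run_cat x s1 s2 : run d x (s1 ++ s2) <-> run d x s1 /\ run d (endcfg x s1) s2.
Proof.
elim: s1 x => [|[[a T] c1] s1 IH] x /=; first by split => // [[]].
rewrite IH; rewrite /endcfg /=; tauto.
Qed.

Lemma endcfg_cat x s1 s2 : endcfg x (s1 ++ s2) = endcfg (endcfg x s1) s2.
Proof. by rewrite /endcfg map_cat last_cat. Qed.

Lemma reach_trans x y z : reach d x y -> reach d y z -> reach d x z.
Proof.
move=> [s1 [r1 e1]] [s2 [r2 e2]]; exists (s1 ++ s2).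
by rewrite run_cat endcfg_cat e1.
Qed.

Lemma chain m (l : seq 'I_k) : uniq l -> forall x (g : 'I_k -> S),
  (forall i, i \in l -> g i = x i \/ d (x i) (Send m) (g i)) ->
  reach d x [ffun j => if j \in l then g j else x j].
Proof.
elim: l => [|i l IH] /= ul x g H.
  exists [::]; split => //; apply/ffunP => j; by rewrite !ffunE.
move/andP: ul => [il ul].
have H' : forall j, j \in l -> g j = x j \/ d (x j) (Send m) (g j).
  by move=> j jl; apply: H; rewrite inE jl orbT.
case: (H i (mem_head _ _)) => [gi|di].
  have -> : [ffun j => if j \in i :: l then g j else x j]
          = [ffun j => if j \in l then g j else x j].
    apply/ffunP => j; rewrite !ffunE inE; case: eqP => // ->.
    by case: ifP.
  exact: IH.
set x1 := [ffun j => if j == i then g i else x j].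
apply: (@reach_trans _ x1).
  exists [:: (m, [set i], x1)]; split => //=; split => //.
  exists i; split; first by rewrite inE.
    by rewrite /x1 ffunE eqxx.
  move=> j ji; rewrite inE (negbTE ji) /x1 ffunE (negbTE ji); by split.
have -> : [ffun j => if j \in i :: l then g j else x j]
        = [ffun j => if j \in l then g j else x1 j].
  apply/ffunP => j; rewrite !ffunE inE /x1 ?ffunE.
  case: (eqVneq j i) => [->|ji] /=; first by rewrite (negbTE il).
  by [].
apply: IH => // j jl; rewrite /x1 ffunE.
have -> : (j == i) = false by apply/eqP => E; move: il; rewrite -E jl.
exact: H'.
Qed.

Lemma chain_all m x (g : 'I_k -> S) :
  (forall i, g i = x i \/ d (x i) (Send m) (g i)) -> reach d x [ffun j => g j].
Proof.
move=> H; have := @chain m (enum 'I_k) (enum_uniq _) x g (fun i _ => H i).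
have -> // : [ffun j => if j \in enum 'I_k then g j else x j] = [ffun j => g j].
by apply/ffunP => j; rewrite !ffunE mem_enum.
Qed.

End Gen.

Section Net.
Variables (Q D : Type) (delta : Q -> Op D -> Q -> Prop) (F : {pred Q}) (k : nat).
Local Notation dF := (deltaF delta F).
Local Notation cfg := {ffun 'I_k -> Q}.
Local Notation cfgF := {ffun 'I_k -> QF Q}.

Definition proj (w : QF Q) : Q := match w with Plain q | Hat q | Tilde q => q end.
Definition projc (z : cfgF) : cfg := [ffun i => proj (z i)].
Definition isPlain (w : QF Q) := if w is Plain _ then true else false.
Definition isTilde (w : QF Q) := if w is Tilde _ then true else false.

Fixpoint projrun (s : seq (option D * {set 'I_k} * cfgF)) : seq (D * {set 'I_k} * cfg) :=
  match s with
  | [::] => [::]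
  | (Some a, T, z) :: s' => (a, T, projc z) :: projrun s'
  | (None, _, _) :: s' => projrun s'
  end.

Lemma dF_some x o y : dF x (liftop o) y ->
  [/\ delta (proj x) o (proj y), isTilde y -> isTilde x & ~~ isPlain y].
Proof.
move E: (liftop o) => o' H; case: H E => //=.
- move=> q o1 q' H E; suff E' : o = o1 by rewrite E'. by move: E; clear H; case: o o1 => [?|?] [?|?] //= [->].
- move=> q o1 q' H E; suff E' : o = o1 by rewrite E'. by move: E; clear H; case: o o1 => [?|?] [?|?] //= [->].
- move=> q o1 q' H E; suff E' : o = o1 by rewrite E'. by move: E; clear H; case: o o1 => [?|?] [?|?] //= [->].
- by move=> q _; case: o.
- by move=> q; case: o.
Qed.

Lemma dF_none x y : dF x (Send None) y ->
  [/\ proj x = proj y, isTilde y -> isTilde x \/ proj x \in F &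
      ~~ isPlain x -> ~~ isPlain y \/ isTilde x].
Proof.
move E: (Send None) => o' H; case: H E => //=.
- by move=> q o q' _; case: o.
- by move=> q o q' _; case: o.
- by move=> q o q' _; case: o.
- by move=> q qF _; split => //= _; [right|left].
- by move=> q _; split => //= _; right.
Qed.

Lemma dF_recv_none x y : ~ dF x (Recv None) y.
Proof.
move E: (Recv None) => o' H; case: H E => //=.
- by move=> q o q' _; case: o.
- by move=> q o q' _; case: o.
- by move=> q o q' _; case: o.
Qed.

Lemma step_some z a T z1 : step dF z (Some a) T z1 ->
  step delta (projc z) a T (projc z1) /\
  forall i, [/\ isTilde (z1 i) -> isTilde (z i), i \in T -> ~~ isPlain (z1 i)
     & ~~ isPlain (z i) -> ~~ isPlain (z1 i)].
Proof.
move=> [i0 [i0T s0 H]].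
have [d0 t0 p0] := dF_some (o := Send a) s0.
split.
  exists i0; rewrite !ffunE; split => // j ji; rewrite !ffunE.
  have [H1 H2] := H j ji; split.
    by move=> jT; have [] := dF_some (o := Recv a) (H1 jT).
  by move=> jT; rewrite H2.
move=> j; case: (eqVneq j i0) => [->|ji]; first by split => // _; rewrite p0.
have [H1 H2] := H j ji.
case jT: (j \in T).
  by have [] := dF_some (o := Recv a) (H1 jT).
by rewrite H2 ?jT.
Qed.

Lemma step_none z T z1 : step dF z None T z1 ->
  projc z1 = projc z /\
  forall i, [/\ isTilde (z1 i) -> isTilde (z i) \/ proj (z i) \in F
     & ~~ isPlain (z i) -> ~~ isPlain (z1 i) \/ isTilde (z i)].
Proof.
move=> [i0 [i0T s0 H]].
have [d0 t0 p0] := dF_none s0.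
have U : forall j, j != i0 -> z1 j = z j.
  move=> j ji; have [H1 H2] := H j ji; case jT: (j \in T).
    by case: (dF_recv_none (H1 jT)).
  by rewrite H2 ?jT.
split.
  apply/ffunP => j; rewrite !ffunE; case: (eqVneq j i0) => [->|ji] //.
  by rewrite U.
move=> j; case: (eqVneq j i0) => [->|ji] //.
by rewrite U // => //; split => ?; left.
Qed.

Lemma run_proj z s : run dF z s ->
  run delta (projc z) (projrun s) /\ endcfg (projc z) (projrun s) = projc (endcfg z s).
Proof.
elim: s z => [|[[[a|] T] z1] s IH] z /=; first by [].
  move=> [/step_some [st _] /IH [r e]]; by split.
move=> [/step_none [e _] /IH [r e']]; by rewrite -e.
Qed.


Lemma good_aux s : forall (z : cfgF) (V P : 'I_k -> Prop), run dF z s ->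
  (forall i, isPlain (endcfg z s i)) ->
  (forall i, proj (z i) \in F -> V i) ->
  (forall i, isTilde (z i) -> V i) ->
  (forall i, P i -> ~~ isPlain (z i) \/ V i) ->
  forall i, (P i \/ exists x, List.In x (projrun s) /\ i \in x.1.2) ->
  V i \/ exists y, List.In y (projrun s) /\ y.2 i \in F.
Proof.
elim: s => [|[[[a|] T] z1] s IH] z V P /=.
  move=> _ Hp _ _ HP i [Pi|[? [[] _]]]; case: (HP i Pi) => [|Vi]; [by move: (Hp i); rewrite /endcfg /= => -> | by left].
  move=> [/step_some [_ St] r] Hp HF HT HP i Hi.
  have := IH z1 (fun i => V i \/ proj (z1 i) \in F) (fun i => P i \/ i \in T) r Hp.
  case/(_ _ _ _ i _).
  - by move=> j; right.
  - move=> j; case: (St j) => A _ _ /A /HT; by left.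
  - move=> j; case: (St j) => _ B C [/HP [/C|]|/B]; [by left|by right; left|by left].
  - case: Hi => [Pi|[x [[<-|xs] xi]]]; [by left; left|by left; right|by right; exists x].
  - move=> [Vi|Fi]; [by left|right; exists (a, T, projc z1); split; [by left|by rewrite ffunE]].
  - move=> [y [ys yF]]; right; exists y; split => //; by right.
move=> [/step_none [E St] r] Hp HF HT HP i Hi.
apply: (IH z1 V P r Hp) => //.
- move=> j; have -> : proj (z1 j) = proj (z j) by have := congr1 (fun f : cfg => f j) E; rewrite /projc !ffunE.
  exact: HF.
- move=> j; case: (St j) => A _ /A [/HT|/HF] //.
- move=> j; case: (St j) => _ B /HP [/B [|/HT]|]; by [left|right|right].
Qed.

Lemma projrun_ne (c : cfg) s : run dF (cfg_plain c) s -> s <> [::] -> projrun s <> [::].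
Proof.
case: s => [|[[[a|] T] z1] s] //= [[i0 [_ s0 _]] _] _.
move: s0; rewrite ffunE; move E: (Plain (c i0)) => w; move E': (Send None) => o H.
by case: H E E' => // q o0 q' _ _; case: o0.
Qed.

Lemma back (c0 c : cfg) :
  reach dF (cfg_tilde c0) (cfg_plain c) -> reach_plus dF (cfg_plain c) (cfg_plain c) ->
  reach delta c0 c /\ good_reach delta (fun q => q \in F) c c.
Proof.
have Pt : forall c1 : cfg, projc (cfg_tilde c1) = c1 by move=> c1; apply/ffunP => i; rewrite !ffunE.
have Pp : forall c1 : cfg, projc (cfg_plain c1) = c1 by move=> c1; apply/ffunP => i; rewrite !ffunE.
move=> [s0 [r0 e0]] [s [ne [r e]]]; split.
  have [r1 e1] := run_proj r0; exists (projrun s0); rewrite -(Pt c0); split => //; by rewrite e1 e0 Pp.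
have [r1 e1] := run_proj r.
exists (projrun s); split.
- exact: projrun_ne r ne.
- by rewrite -(Pp c).
- by rewrite -{1}(Pp c) e1 e Pp.
move=> x xs i ix.
have := @good_aux s (cfg_plain c) (fun i => c i \in F) (fun _ => False) r.
case/(_ _ _ _ _ i _) => //.
- by move=> j; rewrite e ffunE.
- by move=> j; rewrite ffunE.
- by move=> j; rewrite ffunE.
- by right; exists x.
- by left.
- by right.
Qed.

End Net.

Section Fwd.
Variables (Q D : Type) (delta : Q -> Op D -> Q -> Prop) (F : {pred Q}) (k : nat).
Local Notation dF := (deltaF delta F).
Local Notation cfg := {ffun 'I_k -> Q}.
Local Notation cfgF := {ffun 'I_k -> QF Q}.

Definition tilderun (s : seq (D * {set 'I_k} * cfg)) : seq (option D * {set 'I_k} * cfgF) :=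
  [seq (Some x.1.1, x.1.2, cfg_tilde x.2) | x <- s].

Lemma run_tilde (c : cfg) s : run delta c s ->
  run dF (cfg_tilde c) (tilderun s) /\ endcfg (cfg_tilde c) (tilderun s) = cfg_tilde (endcfg c s).
Proof.
elim: s c => [|[[a T] c1] s IH] c //=.
move=> [[i0 [i0T s0 H]] /IH [r e]]; split => //; split => //.
exists i0; rewrite !ffunE; split => //.
  exact: (dF_tilde F (o := Send a) s0).
move=> j ji; have [H1 H2] := H j ji; rewrite !ffunE; split.
  by move=> jT; exact: (dF_tilde F (o := Recv a) (H1 jT)).
by move=> jT; rewrite H2.
Qed.

Definition hatnext (w : QF Q) (q' : Q) : QF Q :=
  match w with Tilde _ => Tilde q' | _ => Hat q' end.

Lemma dF_hatnext w o q' : delta (proj w) o q' -> dF w (liftop o) (hatnext w q').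
Proof. case: w => q /= H; by constructor. Qed.

Definition touched (s : seq (D * {set 'I_k} * cfg)) i := exists x, List.In x s /\ i \in x.1.2.
Definition visits (s : seq (D * {set 'I_k} * cfg)) i := exists y, List.In y s /\ y.2 i \in F.

Lemma sim s : forall (y : cfg) (z : cfgF), run delta y s -> projc z = y ->
 (forall i q, z i = Plain q -> q = endcfg y s i /\ (touched s i -> endcfg y s i \in F \/ visits s i)) ->
 (forall i q, z i = Hat q -> q \in F \/ visits s i \/ endcfg y s i \in F) ->
 exists s', [/\ run dF z s', endcfg z s' = cfg_plain (endcfg y s) & (s <> [::] -> s' <> [::])].
Proof.
have Py : forall (z : cfgF) (y : cfg) i, projc z = y -> proj (z i) = y i.
  by move=> z y i <-; rewrite ffunE.
elim: s => [|[[a T] y1] s IH] y z /=.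
  move=> _ Pz HP HH.
  set z2 : cfgF := [ffun j => match z j with Hat q => Tilde q | w => w end].
  set z3 : cfgF := [ffun j => match z2 j with Tilde q => Plain q | w => w end].
  have R1 : reach dF z z2.
    apply: (@chain_all _ _ _ _ None) => i1 /=.
    case E: (z i1) => [q|q|q]; try by left.
    right; apply: dF_hat_n.
    case: (HH i1 q E) => [//|[[? [[]]]|]].
    by have := Py z y i1 Pz; rewrite E /= => ->.
  have R2 : reach dF z2 z3.
    apply: (@chain_all _ _ _ _ None) => i1 /=.
    case E: (z2 i1) => [q|q|q]; try by left.
    by right; apply: dF_tilde_n.
  have [s' [r' e']] := reach_trans R1 R2.
  exists s'; split => //; rewrite e'.
  apply/ffunP => j; rewrite /z3 /z2 !ffunE.
  have := Py z y j Pz; by case: (z j) => q /= ->.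
move=> [st r] Pz HP HH.
set e := endcfg y1 s.
have Ee : endcfg y ((a, T, y1) :: s) = e by [].
rewrite Ee in HP HH *.
set z' : cfgF := [ffun j => match z j with Hat q => if q \in F then Tilde q else Hat q | w => w end].
set z1 : cfgF := [ffun j => if j \in T then hatnext (z' j) (y1 j) else z' j].
have Ez1 : forall j, z1 j = if j \in T then hatnext (z' j) (y1 j) else z' j.
  by move=> j; rewrite /z1 ffunE.
have Pz' : forall j, proj (z' j) = y j.
  move=> j; rewrite /z' ffunE -(Py z y j Pz); case: (z j) => //= q; by case: ifP.
have R1 : reach dF z z'.
  apply: chain_all => i1; case E: (z i1) => [q|q|q]; try by left.
  case qF: (q \in F); last by left.
  by right; constructor.
have [i0 [i0T s0 Hs]] := st.
have U : forall j, j \notin T -> y1 j = y j.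
  move=> j jT; case: (eqVneq j i0) => [E|ji]; first by rewrite E i0T in jT.
  by apply: (proj2 (Hs j ji)).
have St : step dF z' (Some a) T z1.
  exists i0; split => //.
    rewrite Ez1 i0T; apply: (dF_hatnext (o := Send a)); by rewrite Pz'.
  move=> j ji; have [H1 H2] := Hs j ji; rewrite Ez1; split.
    move=> jT; rewrite jT; apply: (dF_hatnext (o := Recv a)); rewrite Pz'; exact: H1.
  by move=> /negbTE ->.
have Pz1 : projc z1 = y1.
  apply/ffunP => j; rewrite ffunE Ez1; case jT: (j \in T); first by case: (z' j).
  by rewrite Pz' U ?jT.
have Ez' : forall j, z' j = match z j with Hat q => if q \in F then Tilde q else Hat q | w => w end.
  by move=> j; rewrite /z' ffunE.
have Yq : forall i q, z i = Plain q \/ z i = Hat q -> y i = q.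
  by move=> i q [] E; have := Py z y i Pz; rewrite E.
have HP1 : forall i q, z1 i = Plain q -> q = e i /\ (touched s i -> e i \in F \/ visits s i).
  move=> i q; rewrite Ez1; case iT: (i \in T); first by case: (z' i).
  rewrite Ez'; case E: (z i) => [q0|q0|q0] /=; last by []; last by case: ifP.
  move=> [<-]; have [-> H] := HP i q0 E; split => // [[x [xs xi]]].
  case: H; first by exists x; split => //; right.
    by left.
  move=> [yy [[<-|ys] yF]]; last by right; exists yy.
  left; move: yF => /=; rewrite U ?iT // (Yq i q0) ?E; last by left.
  by have [-> _] := HP i q0 E.
have HH1 : forall i q, z1 i = Hat q -> q \in F \/ visits s i \/ e i \in F.
  move=> i q; rewrite Ez1 Ez'; case iT: (i \in T); case E: (z i) => [q0|q0|q0] //=.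
  - move=> [<-]; have [_ H] := HP i q0 E.
    case: H; first by exists (a, T, y1); split; [by left|].
      by right; right.
    move=> [yy [[<-|ys] yF]]; [by left|by right; left; exists yy].
  - case qF: (q0 \in F) => //=; move=> [<-].
    case: (HH i q0 E) => [|[[yy [[<-|ys] yF]]|eF]]; first by rewrite qF.
    + by left.
    + by right; left; exists yy.
    + by right; right.
  - case qF: (q0 \in F) => //=; move=> [<-].
    case: (HH i q0 E) => [|[[yy [[<-|ys] yF]]|eF]]; first by rewrite qF.
    + move: yF => /=; rewrite U ?iT // (Yq i q0) ?E; last by right.
      by rewrite qF.
    + by right; left; exists yy.
    + by right; right.
have [s'' [r'' e'' _]] := IH y1 z1 r Pz1 HP1 HH1.
have [sc [rc ec]] := R1.
exists (sc ++ (Some a, T, z1) :: s''); split.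
- by rewrite run_cat ec.
- by rewrite endcfg_cat ec.
- by case: sc {rc ec}.
Qed.

End Fwd.

Theorem lemma7 (Q D : finType) (delta : Q -> Op D -> Q -> Prop) (F : {pred Q})
  (k : nat) (c0 c : {ffun 'I_k -> Q}) :
  (reach delta c0 c /\ good_reach delta (fun q => q \in F) c c)
  <->
  (reach (deltaF delta F) (cfg_tilde c0) (cfg_plain c) /\
   reach_plus (deltaF delta F) (cfg_plain c) (cfg_plain c)).
Proof.
split; last by move=> [H1 H2]; exact: back.
move=> [[s0 [r0 e0]] [s [ne r e cond]]]; split.
  have [rt et] := run_tilde F r0.
  apply: (@reach_trans _ _ _ _ _ (cfg_tilde c)).
    by exists (tilderun s0); rewrite et e0.
  rewrite /cfg_plain; apply: (@chain_all _ _ _ _ None) => i; right.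
  rewrite ffunE; exact: dF_tilde_n.
have Pp : projc (cfg_plain c) = c by apply/ffunP => i; rewrite !ffunE.
have HP : forall i q, cfg_plain c i = Plain q ->
   q = endcfg c s i /\ (touched s i -> endcfg c s i \in F \/ visits F s i).
  move=> i q; rewrite e ffunE => [[<-]]; split => // [[x [xs xi]]].
  exact: cond x xs i xi.
have HH : forall i q, cfg_plain c i = Hat q -> q \in F \/ visits F s i \/ endcfg c s i \in F.
  by move=> i q; rewrite ffunE.
have [s' [r' e' ne']] := sim r Pp HP HH.
exists s'; split => //; first exact: ne'.
by rewrite e' e.
Qed.
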